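(* Let $L$ be a frame. The map $\nu(F)=\bigcap_{a\in F}\mathfrak o(a)$ restricts to an order isomorphism from $(\mathrm{Int}(\mathsf{SO}(L)),\sqsubseteq)$ onto $(\{\mathrm{fit}(S)\mid S\in\mathcal S_k(L)\},\subseteq)$, with inverse $S\mapsto\{a\in L\mid S\subseteq\mathfrak o(a)\}$.
   Context: A frame is a complete lattice $L$ with $(\bigvee A)\wedge b=\bigvee_{a\in A}(a\wedge b)$, Heyting implication $\to$. A sublocale is a subset $S\subseteq L$ closed under all meets with $a\to s\in S$ for $a\in L,s\in S$; sublocales form a coframe $\mathsf{Sl}(L)$ under inclusion with joins $\bigvee_i S_i=\{\bigwedge A\mid A\subseteq\bigcup_i S_i\}$. $\mathfrak o(a)=\{a\to b\mid b\in L\}$. $\mathrm{fit}(S)=\bigcap\{\mathfrak o(a)\mid S\subseteq\mathfrak o(a)\}$. A sublocale $S$ is compact if $S\subseteq\bigvee_{a\in A}\mathfrak o(a)$ implies $S\subseteq\mathfrak o(a_1)\vee\dots\vee\mathfrak o(a_n)$ for some $a_1,\dots,a_n\in A$; $\mathcal S_k(L)$ is the set of joins in $\mathsf{Sl}(L)$ of compact sublocales. Filters are nonempty up-closed subsets closed under finite meets, ordered by reverse inclusion $\sqsubseteq$; a filter $F$ is Scott-open if every directed $D$ with $\bigvee D\in F$ meets $F$; $\mathsf{SO}(L)$ is the set of Scott-open filters, and $\mathrm{Int}(\mathsf{SO}(L))$ the set of intersections of subfamilies of it (empty intersection $=L$). *)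

(* Defs.v *)
Set Implicit Arguments.
Unset Strict Implicit.
From Stdlib Require Import List.

Record frame := Frame {
  carrier :> Type;
  le : carrier -> carrier -> Prop;
  le_refl : forall a, le a a;
  le_trans : forall a b c, le a b -> le b c -> le a c;
  le_antisym : forall a b, le a b -> le b a -> a = b;
  sup : (carrier -> Prop) -> carrier;
  sup_ub : forall (A : carrier -> Prop) a, A a -> le a (sup A);
  sup_least : forall (A : carrier -> Prop) b, (forall a, A a -> le a b) -> le (sup A) b;
  meet : carrier -> carrier -> carrier;
  meet_glb : forall a b c, le c (meet a b) <-> (le c a /\ le c b);
  meet_sup_distr : forall (A : carrier -> Prop) b,
      meet (sup A) b = sup (fun x => exists a, A a /\ x = meet a b);
  imp : carrier -> carrier -> carrier;
  imp_adj : forall a b c, le c (imp a b) <-> le (meet c a) b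
}.

Arguments le {f} _ _.
Arguments sup {f} _.
Arguments meet {f} _ _.
Arguments imp {f} _ _.

Section FrameDefs.
Context {L : frame}.

Definition subset (A B : L -> Prop) : Prop := forall x, A x -> B x.
Definition same (A B : L -> Prop) : Prop := forall x, A x <-> B x.

Definition inf (A : L -> Prop) : L := sup (fun x => forall a, A a -> le x a).

Definition sublocale (S : L -> Prop) : Prop :=
  (forall A : L -> Prop, subset A S -> S (inf A)) /\
  (forall a s, S s -> S (imp a s)).

(** Join in the coframe Sl(L) of a family of sublocales:
    { /\ A | A subset of the union of the family }. *)
Definition sl_join (Fam : (L -> Prop) -> Prop) : L -> Prop :=
  fun x => exists A : L -> Prop,
      (forall b, A b -> exists S, Fam S /\ S b) /\ x = inf A.

Definition opn (a : L) : L -> Prop := fun x => exists b, x = imp a b.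

Definition fit (S : L -> Prop) : L -> Prop :=
  fun x => forall a, subset S (opn a) -> opn a x.

Definition opens_of (A : L -> Prop) : (L -> Prop) -> Prop :=
  fun T => exists a, A a /\ T = opn a.
Definition opens_of_list (l : list L) : (L -> Prop) -> Prop :=
  fun T => exists a, In a l /\ T = opn a.

Definition compact_sl (S : L -> Prop) : Prop :=
  sublocale S /\
  forall A : L -> Prop, subset S (sl_join (opens_of A)) ->
    exists l : list L, (forall a, In a l -> A a) /\
                       subset S (sl_join (opens_of_list l)).

Definition Sk (S : L -> Prop) : Prop :=
  exists Fam : (L -> Prop) -> Prop,
    (forall T, Fam T -> compact_sl T) /\ same S (sl_join Fam).

Definition filter (F : L -> Prop) : Prop :=
  (exists a, F a) /\
  (forall a b, F a -> le a b -> F b) /\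
  (forall a b, F a -> F b -> F (meet a b)).

Definition directed (D : L -> Prop) : Prop :=
  (exists d, D d) /\
  (forall a b, D a -> D b -> exists c, D c /\ le a c /\ le b c).

Definition scott_open_filter (F : L -> Prop) : Prop :=
  filter F /\
  forall D : L -> Prop, directed D -> F (sup D) -> exists d, D d /\ F d.

(** Int(SO(L)): intersections of families of Scott-open filters
    (the empty intersection being L). *)
Definition IntSO (F : L -> Prop) : Prop :=
  exists G : (L -> Prop) -> Prop,
    (forall H, G H -> scott_open_filter H) /\
    same F (fun x => forall H, G H -> H x).

Definition filter_le (F G : L -> Prop) : Prop := subset G F.

Definition fitSk (T : L -> Prop) : Prop := exists S, Sk S /\ same T (fit S).

Definition nu (F : L -> Prop) : L -> Prop := fun x => forall a, F a -> opn a x.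
Definition nu_inv (S : L -> Prop) : L -> Prop := fun a => subset S (opn a).

End FrameDefs.

(* Main.v *)
Require Import Defs.
From Stdlib Require Import List Classical.

Section S.
Context {L : frame}.
Implicit Types a b c x y : L.

Lemma meet_l a b : le (meet a b) a.
Proof. exact (proj1 (proj1 (meet_glb a b (meet a b)) (le_refl _))). Qed.
Lemma meet_r a b : le (meet a b) b.
Proof. exact (proj2 (proj1 (meet_glb a b (meet a b)) (le_refl _))). Qed.
Lemma meet_intro a b c : le c a -> le c b -> le c (meet a b).
Proof. intros; apply (proj2 (meet_glb a b c)); auto. Qed.
Lemma meet_mono a a' b b' : le a a' -> le b b' -> le (meet a b) (meet a' b').
Proof. intros; apply meet_intro; [eapply le_trans; [apply meet_l|eauto]|eapply le_trans; [apply meet_r|eauto]]. Qed.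
Lemma meet_comm a b : le (meet a b) (meet b a).
Proof. apply meet_intro; [apply meet_r|apply meet_l]. Qed.
Lemma imp_intro a b c : le (meet c a) b -> le c (imp a b).
Proof. apply imp_adj. Qed.
Lemma imp_elim a b c : le c (imp a b) -> le (meet c a) b.
Proof. apply imp_adj. Qed.
Lemma imp_mp a b : le (meet (imp a b) a) b.
Proof. apply imp_elim, le_refl. Qed.
Lemma le_imp_self a x : le x (imp a x).
Proof. apply imp_intro, meet_l. Qed.
Lemma imp_mono2 a x y : le x y -> le (imp a x) (imp a y).
Proof. intros H; apply imp_intro; eapply le_trans; [apply imp_mp|exact H]. Qed.
Lemma imp_anti1 a a' x : le a a' -> le (imp a' x) (imp a x).
Proof. intros H; apply imp_intro; eapply le_trans; [apply meet_mono; [apply le_refl|exact H]|apply imp_mp]. Qed.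

Lemma opn_iff a x : opn a x <-> imp a x = x.
Proof.
  split.
  - intros [b ->]. apply le_antisym; [|apply le_imp_self].
    apply imp_intro. eapply le_trans; [|apply (imp_mp a b)].
    apply meet_intro; [apply imp_mp|apply meet_r].
  - intros E; exists x; symmetry; exact E.
Qed.

Lemma opn_mono a a' x : le a a' -> opn a x -> opn a' x.
Proof.
  intros H Hx; apply opn_iff in Hx; apply opn_iff.
  apply le_antisym; [|apply le_imp_self].
  rewrite <- Hx at 2. apply imp_anti1, H.
Qed.

Lemma opn_meet a b x : opn a x -> opn b x -> opn (meet a b) x.
Proof.
  intros Ha Hb; apply opn_iff in Ha; apply opn_iff in Hb; apply opn_iff.
  apply le_antisym; [|apply le_imp_self].
  apply (@le_trans _ _ (imp b (imp a x))).
  - apply imp_intro, imp_intro.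
    eapply le_trans; [|apply imp_mp].
    apply meet_intro.
    + eapply le_trans; apply meet_l.
    + apply meet_intro; [apply meet_r|]. eapply le_trans; [apply meet_l|apply meet_r].
  - rewrite Ha, Hb; apply le_refl.
Qed.

Lemma inf_lb (A : L -> Prop) y : A y -> le (inf A) y.
Proof. intros H; apply sup_least; intros x Hx; apply Hx, H. Qed.
Lemma inf_glb (A : L -> Prop) c : (forall y, A y -> le c y) -> le c (inf A).
Proof. intros H; apply sup_ub, H. Qed.

Lemma opn_inf a (A : L -> Prop) : (forall y, A y -> opn a y) -> opn a (inf A).
Proof.
  intros H; apply opn_iff; apply le_antisym; [|apply le_imp_self].
  apply inf_glb; intros y Hy.
  eapply le_trans; [apply imp_mono2, inf_lb, Hy|].
  rewrite (proj1 (opn_iff a y) (H y Hy)); apply le_refl.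
Qed.

Lemma opn_imp a c s : opn a s -> opn a (imp c s).
Proof.
  intros Ha; apply opn_iff in Ha; apply opn_iff.
  apply le_antisym; [|apply le_imp_self].
  apply (@le_trans _ _ (imp c (imp a s))).
  - apply imp_intro, imp_intro.
    eapply le_trans; [|apply (imp_mp c s)].
    apply meet_intro.
    + eapply le_trans; [|apply (imp_mp a)].
      apply meet_intro; [eapply le_trans; apply meet_l|apply meet_r].
    + eapply le_trans; [apply meet_l|apply meet_r].
  - rewrite Ha; apply le_refl.
Qed.

Definition top : L := sup (fun _ => True).
Lemma le_top x : le x top.
Proof. exact (@sup_ub _ (fun _ => True) x I). Qed.

Lemma inf_single x : inf (fun y => y = x) = x.
Proof.
  apply le_antisym; [apply inf_lb; reflexivity|].
  apply inf_glb; intros y ->; apply le_refl.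
Qed.

Lemma sl_join_sub (Fam : (L -> Prop) -> Prop) a :
  (forall K, Fam K -> subset K (opn a)) -> subset (sl_join Fam) (opn a).
Proof.
  intros H x [B [HB ->]]. apply opn_inf. intros y Hy.
  destruct (HB y Hy) as [K [FK Ky]]. exact (H K FK y Ky).
Qed.

Lemma sl_join_incl (Fam : (L -> Prop) -> Prop) K : Fam K -> subset K (sl_join Fam).
Proof.
  intros FK x Kx. exists (fun y => y = x). split.
  - intros b ->. exists K; auto.
  - symmetry; apply inf_single.
Qed.

Lemma opens_sub (A : L -> Prop) : subset (sl_join (opens_of A)) (opn (sup A)).
Proof.
  apply sl_join_sub. intros K [a [Aa ->]] x. apply opn_mono. apply sup_ub; auto.
Qed.

Lemma sub_opens (A : L -> Prop) : subset (opn (sup A)) (sl_join (opens_of A)).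
Proof.
  intros x Hx. apply opn_iff in Hx.
  exists (fun y => exists a, A a /\ y = imp a x). split.
  - intros y [a [Aa ->]]. exists (opn a). split.
    + exists a; auto.
    + exists x; reflexivity.
  - apply le_antisym.
    + apply inf_glb. intros y [a [Aa ->]]. apply le_imp_self.
    + apply (@le_trans _ _ (imp (sup A) x)); [|rewrite Hx; apply le_refl].
      apply imp_intro. eapply le_trans; [apply meet_comm|].
      rewrite meet_sup_distr. apply sup_least. intros z [a [Aa ->]].
      eapply le_trans; [apply meet_comm|].
      eapply le_trans; [|apply (imp_mp a x)].
      apply meet_mono; [|apply le_refl]. apply inf_lb. exists a; auto.
Qed.


Lemma HM (H : L -> Prop) b : scott_open_filter H -> subset (nu H) (opn b) -> H b.
Proof.
  intros [[[a0 Ha0] [Hup Hmeet]] Hsc] Hsub.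
  apply NNPP; intros Hb.
  set (D := fun y => le b y /\ ~ H y).
  assert (dirD : forall E : L -> Prop, directed E -> (forall y, E y -> D y) -> D (sup E)).
  { intros E HE HED. split.
    - destruct HE as [[e Ee] _]. eapply le_trans; [apply (HED e Ee)|apply sup_ub, Ee].
    - intros Hs. destruct (Hsc E HE Hs) as [d [Ed Hd]]. exact (proj2 (HED d Ed) Hd). }
  set (M := fun f : L -> L => (forall x y, le x y -> le (f x) (f y)) /\ (forall x, le x (f x)) /\ (forall x, D x -> D (f x))).
  assert (Mid : M (fun x => x)). { split; [|split]; auto using le_refl. }
  assert (Mcomp : forall f g, M f -> M g -> M (fun x => f (g x))).
  { intros f g [f1 [f2 f3]] [g1 [g2 g3]]. split; [|split]; auto.
    intros x. eapply le_trans; [apply g2|apply f2]. }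
  set (h := fun x => sup (fun y => exists f, M f /\ y = f x)).
  assert (dirE : forall x, directed (fun y => exists f, M f /\ y = f x)).
  { intros x. split.
    - exists x, (fun x => x); auto.
    - intros y1 y2 [f [Mf ->]] [g [Mg ->]]. exists (f (g x)). split.
      + exists (fun x => f (g x)); split; auto.
      + destruct Mf as [f1 [f2 f3]]; destruct Mg as [g1 [g2 g3]]. split.
        * apply f1, g2.
        * apply f2. }
  assert (Mh : M h).
  { split; [|split].
    - intros x y Hxy. apply sup_least. intros z [f [Mf ->]].
      eapply le_trans; [apply (proj1 Mf _ _ Hxy)|]. apply sup_ub. exists f; auto.
    - intros x. apply sup_ub. exists (fun x => x); auto.
    - intros x Dx. apply dirD; [apply dirE|]. intros y [f [Mf ->]]. apply (proj2 (proj2 Mf)), Dx. }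
  set (k := fun y => sup (fun w => exists a, H a /\ w = imp a y)).
  assert (dirk : forall x, directed (fun w => exists a, H a /\ w = imp a x)).
  { intros x. split.
    - exists (imp a0 x), a0; auto.
    - intros y1 y2 [a [Ha ->]] [a' [Ha' ->]]. exists (imp (meet a a') x). split.
      + exists (meet a a'); split; auto.
      + split; apply imp_anti1; [apply meet_l|apply meet_r]. }
  assert (Mk : M k).
  { split; [|split].
    - intros x y Hxy. apply sup_least. intros w [a [Ha ->]].
      eapply le_trans; [apply imp_mono2, Hxy|]. apply sup_ub; exists a; auto.
    - intros x. eapply le_trans; [apply (le_imp_self a0)|]. apply sup_ub; exists a0; auto.
    - intros x [Dx1 Dx2]. split.
      + eapply le_trans; [exact Dx1|]. eapply le_trans; [apply (le_imp_self a0)|].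
        apply sup_ub; exists a0; auto.
      + intros Hk. destruct (Hsc _ (dirk x) Hk) as [w [[a [Ha ->]] Hw]].
        apply Dx2. eapply Hup; [apply (Hmeet _ _ Hw Ha)|apply imp_mp]. }
  set (z := h b).
  assert (Dz : D z). { apply (proj2 (proj2 Mh)). split; [apply le_refl|exact Hb]. }
  assert (kz : le (k z) z).
  { unfold z at 2, h. apply sup_ub. exists (fun x => k (h x)); split; auto. }
  assert (nz : nu H z).
  { intros a Ha. apply opn_iff. apply le_antisym; [|apply le_imp_self].
    eapply le_trans; [|exact kz]. apply sup_ub. exists a; auto. }
  specialize (Hsub z nz). apply opn_iff in Hsub. apply (proj2 Dz).
  eapply Hup; [exact Ha0|]. rewrite <- Hsub. apply imp_intro.
  eapply le_trans; [apply meet_r|exact (proj1 Dz)].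
Qed.

Lemma nu_sublocale (H : L -> Prop) : sublocale (nu H).
Proof.
  split.
  - intros A HA a Ha. apply opn_inf. intros y Hy. exact (HA y Hy a Ha).
  - intros c s Hs a Ha. apply opn_imp, Hs, Ha.
Qed.

Lemma sof_compact (H : L -> Prop) : scott_open_filter H -> compact_sl (nu H).
Proof.
  intros HS. split; [apply nu_sublocale|].
  intros A HA.
  assert (HsA : H (sup A)). { apply HM; auto. intros x Hx; apply opens_sub, HA, Hx. }
  destruct HS as [[Hne [Hup Hmeet]] Hsc].
  set (Dl := fun y => exists l, (forall a, In a l -> A a) /\ y = sup (fun a => In a l)).
  assert (dirDl : directed Dl).
  { split.
    - exists (sup (fun a => In a nil)), nil. split; [intros a []|reflexivity].
    - intros y1 y2 [l1 [Hl1 ->]] [l2 [Hl2 ->]]. exists (sup (fun a => In a (l1 ++ l2))). split.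
      + exists (l1 ++ l2). split; [|reflexivity]. intros a Ha. apply in_app_or in Ha as [Ha|Ha]; auto.
      + split; apply sup_least; intros a Ha; apply sup_ub; apply in_or_app; auto. }
  assert (HD : H (sup Dl)).
  { eapply Hup; [exact HsA|]. apply sup_least. intros a Aa.
    apply (@le_trans _ _ (sup (fun b => In b (a::nil)))).
    - apply sup_ub; left; reflexivity.
    - apply sup_ub. exists (a::nil). split; [intros b [<-|[]]; exact Aa|reflexivity]. }
  destruct (Hsc Dl dirDl HD) as [d [[l [Hl ->]] Hd]].
  exists l. split; [exact Hl|].
  intros x Hx. exact (sub_opens (fun a => In a l) x (Hx _ Hd)).
Qed.

Lemma compact_sof (K : L -> Prop) : compact_sl K -> scott_open_filter (nu_inv K).
Proof.
  intros [_ HK]. split; [split; [|split]|].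
  - exists top. intros x _. apply opn_iff. apply le_antisym; [|apply le_imp_self].
    eapply le_trans; [|apply (imp_mp top x)]. apply meet_intro; [apply le_refl|apply le_top].
  - intros a b Ha Hab x Kx. eapply opn_mono; eauto.
  - intros a b Ha Hb x Kx. apply opn_meet; auto.
  - intros D [[d0 Hd0] Hdir] HD.
    destruct (HK D (fun x Kx => sub_opens D x (HD x Kx))) as [l [Hl Hsub]].
    assert (ub : exists d, D d /\ forall a, In a l -> le a d).
    { clear Hsub. revert Hl. induction l as [|a l IH]; intros Hl.
      - exists d0; split; [auto|intros a []].
      - destruct IH as [d [Dd Hd]]. { intros b Hb; apply Hl; right; auto. }
        destruct (Hdir a d (Hl a (or_introl eq_refl)) Dd) as [c [Dc [Hac Hdc]]].
        exists c. split; auto. intros b [<-|Hb]; auto. eapply le_trans; eauto. }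
    destruct ub as [d [Dd Hd]]. exists d. split; auto.
    intros x Kx. eapply opn_mono; [apply sup_least; exact Hd|].
    apply (opens_sub (fun a => In a l)). apply Hsub, Kx.
Qed.

Lemma part3 (F : L -> Prop) : IntSO F -> same (nu_inv (nu F)) F.
Proof.
  intros [G [HG HF]] a. unfold nu_inv. split.
  - intros Ha. apply HF. intros H GH. apply HM; [apply HG; auto|].
    intros x Hx. apply Ha. intros b Fb. apply Hx. apply (proj1 (HF b) Fb H GH).
  - intros Fa x Hx. apply Hx, Fa.
Qed.

End S.

Theorem mainTheorem14 (L : frame) :
  (forall F : L -> Prop, IntSO F -> fitSk (nu F)) /\
  (forall T : L -> Prop, fitSk T -> IntSO (nu_inv T)) /\
  (forall F : L -> Prop, IntSO F -> same (nu_inv (nu F)) F) /\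
  (forall T : L -> Prop, fitSk T -> same (nu (nu_inv T)) T) /\
  (forall F G : L -> Prop, IntSO F -> IntSO G ->
     (filter_le F G <-> subset (nu F) (nu G))).
Proof.
  split; [|split; [|split; [|split]]].
  - intros F [G [HG HF]].
    exists (sl_join (fun T => exists H, G H /\ T = nu H)). split.
    + exists (fun T => exists H, G H /\ T = nu H). split.
      * intros T [H [GH ->]]. apply sof_compact, HG, GH.
      * intros x; split; auto.
    + intros x. unfold nu, fit. split.
      * intros Hx a Ha. apply Hx. apply HF. intros H GH. apply HM; [apply HG, GH|].
        intros y Hy. apply Ha. apply (sl_join_incl _ (nu H)); [exists H; auto|exact Hy].
      * intros Hx a Fa. apply Hx. apply sl_join_sub. intros K [H [GH ->]] y Hy.
        apply Hy. apply (proj1 (HF a) Fa H GH).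
  - intros T [S [[Fam [HFam HS]] HT]].
    exists (fun H => exists K, Fam K /\ H = nu_inv K). split.
    + intros H [K [FK ->]]. apply compact_sof, HFam, FK.
    + intros a. unfold nu_inv. split.
      * intros Ha H [K [FK ->]] x Kx. apply Ha. apply HT.
        intros a' Sa'. apply Sa'. apply HS. apply (sl_join_incl _ K FK x Kx).
      * intros Ha x Tx. apply HT in Tx. apply Tx. intros y Sy. apply HS in Sy.
        revert y Sy; apply sl_join_sub. intros K FK. exact (Ha _ (ex_intro _ K (conj FK eq_refl))).
  - apply part3.
  - intros T [S [_ HT]] x. unfold nu, nu_inv. split; intros Hx.
    + apply HT. intros a Sa. apply Hx. intros y Ty. apply HT in Ty. apply Ty, Sa.
    + intros a Ta. apply Ta, Hx.
  - intros F G HF HG. split.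
    + intros Hle x Hx a Ga. apply Hx, Hle, Ga.
    + intros Hsub a Ga. apply (proj1 (part3 F HF a)). intros x Hx.
      apply (proj2 (part3 G HG a) Ga). apply Hsub, Hx.
Qed.
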